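(* Let $(E,\tau)$ be a uniquely generated violator space. Then the partition $\mathcal{P}$ of $2^E$ into the equivalence classes of the relation $X\sim Y\iff\tau(X)=\tau(Y)$ is a hypercube partition of $2^E$, i.e., every equivalence class is an interval $[A,B]=\{C\subseteq E: A\subseteq C\subseteq B\}$ for some $A\subseteq B\subseteq E$.
   Context: $E$ is a finite set and $\tau:2^E\to 2^E$. $(E,\tau)$ is a violator space if (C1) $Y\subseteq\tau(Y)$ for all $Y\subseteq E$, and (C22) for all $F,G\subseteq E$, $F\subseteq G\subseteq\tau(F)$ implies $\tau(G)=\tau(F)$. For $X\subseteq E$, a generator of $X$ is any $B\subseteq E$ with $\tau(B)=\tau(X)$; a basis of $X$ is an inclusion-minimal generator of $X$. The space is uniquely generated if every $X\subseteq E$ has exactly one basis. A hypercube partition of $2^E$ is a partition of $2^E$ into disjoint intervals $[A,B]$. *)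

(* Defs.v *)
From mathcomp Require Import all_boot.
Set Implicit Arguments. Unset Strict Implicit. Unset Printing Implicit Defensive.

Definition violator_space (E : finType) (tau : {set E} -> {set E}) : Prop :=
  (forall Y : {set E}, Y \subset tau Y) /\
  (forall F G : {set E}, F \subset G -> G \subset tau F -> tau G = tau F).

Definition generator (E : finType) (tau : {set E} -> {set E}) (X B : {set E}) : Prop :=
  tau B = tau X.

Definition basis (E : finType) (tau : {set E} -> {set E}) (X B : {set E}) : Prop :=
  generator tau X B /\
  (forall B' : {set E}, B' \subset B -> generator tau X B' -> B' = B).

Definition uniquely_generated (E : finType) (tau : {set E} -> {set E}) : Prop :=
  forall X : {set E}, exists B : {set E},
    basis tau X B /\ forall B', basis tau X B' -> B' = B.

Definition interval (E : finType) (A B : {set E}) : {set {set E}} :=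
  [set C : {set E} | (A \subset C) && (C \subset B)].

Definition tau_class (E : finType) (tau : {set E} -> {set E}) (X : {set E})
  : {set {set E}} := [set Y : {set E} | tau Y == tau X].

Definition classes_are_intervals (E : finType) (tau : {set E} -> {set E}) : Prop :=
  forall X : {set E}, exists A B : {set E},
    A \subset B /\ tau_class tau X = interval A B.

(* Main.v *)
Require Import Defs.
From mathcomp Require Import all_boot.

Theorem mainTheorem16 (E : finType) (tau : {set E} -> {set E}) :
  violator_space tau -> uniquely_generated tau -> classes_are_intervals tau.
Proof.
move=> [C1 C22] UG X.
have [A [[gA minA] uA]] := UG X.
have AsubT : A \subset tau X by rewrite -gA C1.
exists A, (tau X); split => //.
apply/setP => Y; rewrite !inE; apply/idP/idP.
- move/eqP => tY.
  have PY : [pred Z : {set E} | (tau Z == tau X) && (Z \subset Y)] Y.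
    by rewrite /= tY eqxx subxx.
  have [B mB _] := minset_exists PY.
  have /andP [/eqP tB BY] := minsetp mB.
  have bB : basis tau X B.
    split => // B' B'B gB'.
    apply: (minsetinf mB) => //=.
    by rewrite gB' eqxx (subset_trans B'B BY).
  by rewrite -(uA _ bB) BY /= -tY C1.
- move/andP => [AY YT].
  rewrite (C22 A Y AY) ?gA //.
Qed.
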